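(* Let $L=K_1\cup\cdots\cup K_n$ be a virtual $n$-string link, where $K_i$ is the string starting at $(i,1)$, and write its bowling ball matrix as $M(L)=(a_{ij}s+b_{ij})_{n\times n}$ with $a_{ij}\in\mathbb{Z}$, $b_{ij}\in\{0,1\}$. Let $a_i(L)=\max_{1\le j\le n}|a_{ij}|$, and let $lk_v(L;K_i)$ be the minimum, over all virtual string link diagrams representing $L$, of the number of virtual crossings between $K_i$ and the strings $K_j$, $j\neq i$. Then $lk_v(L;K_i)\ge a_i(L)$.
   Context: A virtual $n$-string link diagram is a collection of $n$ oriented immersed strings in $\mathbb{R}\times[0,1]$, the $i$-th running from $(i,1)$ to $(\pi(i),0)$ for a permutation $\pi$, whose crossings are either real (with over/under information) or virtual; virtual string links are equivalence classes of such diagrams under generalized Reidemeister moves (classical moves, virtual moves and the mixed move). Bowling ball matrix $M(L)$: a ball travels from a top endpoint along the orientation. At a real crossing it always continues along its strand (weight $1$). At a virtual crossing, rotated so both strands point downward, a ball arriving along the strand entering from the upper left jumps to the other strand with weight $s$ and continues with weight $1-s$; a ball arriving along the strand from the upper right jumps with weight $-s$ and continues with weight $1+s$; here $s^2=0$. A path's weight is the product of the weights at the virtual crossings it passes, and $m_{ij}\in\mathbb{Z}[s]/(s^2)$ is the sum of the weights of all paths from $(i,1)$ to $(j,0)$ (only finitely many have nonzero weight). $M(L)$ is an invariant of the virtual string link and each entry has the form $as+b$ with $a\in\mathbb{Z}$, $b\in\{0,1\}$. *)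

(* Defs.v *)
From mathcomp Require Import all_boot all_algebra.
Set Implicit Arguments. Unset Strict Implicit. Unset Printing Implicit Defensive.
Import GRing.Theory Num.Theory.

(* Diagrams.  A diagram in R x [0,1] in general position with respect to the *)
(* height function is cut into horizontal slices, read from top (height 1)   *)
(* to bottom (height 0).  Level l (l = 0 .. size D) is a horizontal line     *)
(* meeting the diagram in [width l] points, numbered 0,1,... from left to    *)
(* right; level 0 is the top line, level (size D) the bottom line.  Slice l  *)
(* lies between levels l and l+1 and contains exactly one elementary piece:  *)
(*  - SCross k b : a real crossing between the strand joining top point k to *)
(*                 bottom point k+1 (the "A-line") and the strand joining    *)
(*                 top point k+1 to bottom point k (the "B-line"); b says    *)
(*                 whether the A-line is the over strand;                    *)
(*  - SVirt k    : a virtual crossing between the same two lines;            *)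
(*  - SCup k     : a local minimum joining top points k and k+1 (width -2);  *)
(*  - SCap k     : a local maximum creating bottom points k and k+1 (+2).    *)
(* All other points go straight through.                                     *)

Inductive slice : Type :=
| SCross of nat & bool
| SVirt of nat
| SCup of nat
| SCap of nat.

Definition diagram := seq slice.

Definition width_after (w : nat) (s : slice) : nat :=
  match s with SCup _ => w - 2 | SCap _ => w + 2 | _ => w end.

Definition slice_ok (w : nat) (s : slice) : bool :=
  match s with
  | SCross k _ | SVirt k | SCup k => k.+1 < w
  | SCap k => k <= w
  end.

Fixpoint shape_ok (w n : nat) (D : diagram) : bool :=
  match D with
  | [::] => w == n
  | s :: D' => slice_ok w s && shape_ok (width_after w s) n D'
  end.

Fixpoint widths (w : nat) (D : diagram) : seq nat :=
  match D with
  | [::] => [:: w]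
  | s :: D' => w :: widths (width_after w s) D'
  end.

Definition width (n : nat) (D : diagram) (l : nat) : nat := nth 0 (widths n D) l.

Definition sl (D : diagram) (l : nat) : slice := nth (SVirt 0) D l.

Definition swap (k p : nat) : nat :=
  if p == k then k.+1 else if p == k.+1 then k else p.

(* A state (l, p, dn): the traveller is at point p of level l and is about  *)
(* to move downward (dn = true, through slice l) or upward (dn = false,     *)
(* through slice l-1).                                                       *)
Definition state := (nat * nat * bool)%type.

(* A passage through a virtual crossing: (slice index, on the A-line?,       *)
(* traversed downward?).                                                     *)
Definition passage := (nat * bool * bool)%type.

Definition step (D : diagram) (st : state) : option (state * option passage) :=
  let: (l, p, dn) := st in
  if dn then
    match sl D l with
    | SCross k _ => Some ((l.+1, swap k p, true), None)
    | SVirt k => Some ((l.+1, swap k p, true),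
                       if (p == k) || (p == k.+1) then Some (l, p == k, true) else None)
    | SCup k => if p == k then Some ((l, k.+1, false), None)
                else if p == k.+1 then Some ((l, k, false), None)
                else if p < k then Some ((l.+1, p, true), None)
                else Some ((l.+1, p - 2, true), None)
    | SCap k => if p < k then Some ((l.+1, p, true), None)
                else Some ((l.+1, p + 2, true), None)
    end
  else
    match l with
    | 0 => None (* would leave through the top line: not allowed *)
    | l'.+1 =>
      match sl D l' with
      | SCross k _ => Some ((l', swap k p, false), None)
      | SVirt k => Some ((l', swap k p, false),
                         if (p == k) || (p == k.+1) then Some (l', p == k.+1, false) else None)
      | SCup k => if p < k then Some ((l', p, false), None)
                  else Some ((l', p + 2, false), None)
      | SCap k => if p == k then Some ((l, k.+1, true), None)
                  else if p == k.+1 then Some ((l, k, true), None)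
                  else if p < k then Some ((l', p, false), None)
                  else Some ((l', p - 2, false), None)
      end
    end.

Definition ocons (T : Type) (o : option T) (s : seq T) : seq T :=
  match o with Some x => x :: s | None => s end.

Fixpoint trace (D : diagram) (fuel : nat) (st : state)
  : option (seq passage * seq state * nat) :=
  match fuel with
  | 0 => None
  | f.+1 =>
    if st.2 && (st.1.1 == size D) then Some ([::], [:: st], st.1.2) else
    match step D st with
    | None => None
    | Some (st', op) =>
      match trace D f st' with
      | None => None
      | Some (ps, vs, e) => Some (ocons op ps, st :: vs, e)
      end
    end
  end.

(* The dynamics is deterministic, reversible and the start state has no     *)
(* predecessor, so a trajectory never repeats a state; this fuel (number of *)
(* states + 1) is therefore always sufficient.                              *)
Definition fuel (n : nat) (D : diagram) : nat := (2 * sumn (widths n D)).+2.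

Definition string_trace (n : nat) (D : diagram) (i : nat) :=
  trace D (fuel n D) (0, i, true).

Definition passages (n : nat) (D : diagram) (i : nat) : seq passage :=
  match string_trace n D i with Some (ps, _, _) => ps | None => [::] end.
Definition visited (n : nat) (D : diagram) (i : nat) : seq state :=
  match string_trace n D i with Some (_, vs, _) => vs | None => [::] end.
Definition endpos (n : nat) (D : diagram) (i : nat) : nat :=
  match string_trace n D i with Some (_, _, e) => e | None => 0 end.

(* A virtual n-string link diagram: consistent shape with n top and n bottom *)
(* points, every string started at a top point ends at a bottom point, and   *)
(* there are no closed components (every point of every level lies on one   *)
(* of the n strings).                                                        *)
Definition vsl_diagram (n : nat) (D : diagram) : bool :=
  shape_ok n n D
  && all (fun i => string_trace n D i != None) (iota 0 n)
  && all (fun l => all (fun p => has (fun i => ((l, p, true) \in visited n D i)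
                                            || ((l, p, false) \in visited n D i))
                                     (iota 0 n))
                       (iota 0 (width n D l)))
         (iota 0 (size D).+1).

(* Virtual crossings along the strings.  Passage t of string k (the t-th     *)
(* virtual crossing met along K_k) has a partner: the other passage through  *)
(* the same virtual crossing.                                                *)

Definition dpass : passage := (0, false, false).

Definition partner (n : nat) (D : diagram) (k t : nat) : option (nat * nat) :=
  let l := (nth dpass (passages n D k) t).1.1 in
  ohead [seq kt <- [seq (k', t') | k' <- iota 0 n, t' <- iota 0 (size (passages n D k'))]
         | (kt != (k, t)) && ((nth dpass (passages n D kt.1) kt.2).1.1 == l)].

(* Is passage t of string k the strand entering from the upper left, once the *)
(* crossing is rotated so that both strands point downward?  Direction        *)
(* vectors: A-line down (1,-1), up (-1,1); B-line down (-1,-1), up (1,1).     *)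
(* The upper-left strand L and upper-right strand R satisfy det(L,R) < 0,     *)
(* which gives: the A-line strand is L iff both strands have the same         *)
(* vertical direction.                                                        *)
Definition upper_left (n : nat) (D : diagram) (k t : nat) : bool :=
  let p := nth dpass (passages n D k) t in
  match partner n D k t with
  | Some (k', t') => p.1.2 == (p.2 == (nth dpass (passages n D k') t').2)
  | None => p.1.2
  end.

Definition vcross_other (n : nat) (D : diagram) (i : nat) : nat :=
  count (fun t => match partner n D i t with Some (k', _) => k' != i | None => false end)
        (iota 0 (size (passages n D i))).

(* Z[s]/(s^2): pairs (b, a) standing for a s + b.                            *)
Definition dual := (int * int)%type.
Definition dadd (x y : dual) : dual := (x.1 + y.1, x.2 + y.2)%R.
Definition dmul (x y : dual) : dual := (x.1 * y.1, x.1 * y.2 + x.2 * y.1)%R.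
Definition dzero : dual := (0%R, 0%R).
Definition done_ : dual := (1%R, 0%R).

(* weights: upper-left strand: jump s, continue 1 - s;
            upper-right strand: jump -s, continue 1 + s *)
Definition jump_w (b : bool) : dual := if b then (0%R, 1%R) else (0%R, (-1)%R).
Definition cont_w (b : bool) : dual := if b then (1%R, (-1)%R) else (1%R, 1%R).

(* A bowling-ball path is determined by its sequence of decisions at the     *)
(* virtual crossings it passes (true = jump).  run k t ds: ball on string k   *)
(* about to pass its t-th virtual passage; returns the bottom endpoint and    *)
(* the weight, if ds is exactly the decision sequence of a complete path.    *)
Fixpoint run (n : nat) (D : diagram) (k t : nat) (ds : seq bool) : option (nat * dual) :=
  match ds with
  | [::] => if t == size (passages n D k) then Some (endpos n D k, done_) else None
  | d :: ds' =>
    if t < size (passages n D k) then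
      if d then
        match partner n D k t with
        | Some (k', t') =>
            match run n D k' t'.+1 ds' with
            | Some (j, w) => Some (j, dmul (jump_w (upper_left n D k t)) w)
            | None => None
            end
        | None => None
        end
      else
        match run n D k t.+1 ds' with
        | Some (j, w) => Some (j, dmul (cont_w (upper_left n D k t)) w)
        | None => None
        end
    else None
  end.

Fixpoint bseqs (m : nat) : seq (seq bool) :=
  match m with
  | 0 => [:: [::]]
  | m'.+1 => [seq b :: s | b <- [:: true; false], s <- bseqs m']
  end.

(* Every path of nonzero weight makes at most one jump, hence passes at most *)
(* 2 * (total number of virtual passages) crossings; paths with >= 2 jumps  *)
(* have weight 0.  So summing over all paths of at most this length is the  *)
(* (finite) sum over all paths of the definition.                           *)
Definition path_bound (n : nat) (D : diagram) : nat :=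
  2 * sumn [seq size (passages n D k) | k <- iota 0 n].

(* entry m_ij of the bowling ball matrix M(D) (strings and bottom points   *)
(* numbered from 0) *)
Definition bb_entry (n : nat) (D : diagram) (i j : nat) : dual :=
  foldr dadd dzero
    [seq match run n D i 0 ds with
         | Some (j', w) => if j' == j then w else dzero
         | None => dzero
         end
    | m <- iota 0 (path_bound n D).+1, ds <- bseqs m].

Definition bb_matrix (n : nat) (D : diagram) : 'M[dual]_n :=
  \matrix_(i < n, j < n) bb_entry n D i j.

Definition a_row (n : nat) (D : diagram) (i : 'I_n) : nat :=
  \max_(j < n) `|(bb_matrix n D i j).2|%N.

(* Main.v *)
Require Import Defs.
From mathcomp Require Import all_boot all_order all_algebra.
From mathcomp Require Import zify.
Set Implicit Arguments. Unset Strict Implicit. Unset Printing Implicit Defensive.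
Import GRing.Theory Num.Theory.

Definition final (D : diagram) (st : state) := st.2 && (st.1.1 == size D).

Lemma trace_pass D f st ps vs e P :
  trace D f st = Some (ps, vs, e) -> P \in ps ->
  exists x x', [/\ x \in vs, ~~ final D x & step D x = Some (x', Some P)].
Proof.
elim: f st ps vs e => [|f IH] st ps vs e //=.
case: ifP => [_ [<- _ _]|Hf] //.
case Hs: (step D st) => [[st' op]|] //.
case Ht: (trace D f st') => [[[ps' vs'] e']|] // [<- <- _].
case: op Hs => [P0|] Hs /=.
- rewrite inE => /orP [/eqP ->|HP].
  + exists st, st'; split => //; [by rewrite mem_head | by rewrite /final Hf].
  + have [x [x'' [H1 H2 H3]]] := IH _ _ _ _ Ht HP.
    by exists x, x''; split => //; rewrite inE H1 orbT.
- move=> HP; have [x [x'' [H1 H2 H3]]] := IH _ _ _ _ Ht HP.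
  by exists x, x''; split => //; rewrite inE H1 orbT.
Qed.

Lemma trace_pred D f st ps vs e x :
  trace D f st = Some (ps, vs, e) -> x \in vs -> x != st ->
  exists y op, [/\ y \in vs, step D y = Some (x, op) & forall P, op = Some P -> P \in ps].
Proof.
elim: f st ps vs e => [|f IH] st ps vs e //=.
case: ifP => [_ [_ <- _]|Hf]; first by rewrite inE => /eqP ->; rewrite eqxx.
case Hs: (step D st) => [[st' op]|] //.
case Ht: (trace D f st') => [[[ps' vs'] e']|] // [<- <- _].
rewrite inE => /orP [/eqP -> |Hx]; first by rewrite eqxx.
move=> Hne.
have Hps : forall P, P \in ps' -> P \in ocons op ps'.
  by case: op {Hs} => [?|] P //= HP; rewrite inE HP orbT.
case: (eqVneq x st') => [Exst|Hne'].
- exists st, op; split => //; first by rewrite mem_head.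
  + by rewrite Exst.
  + by move=> P Eop; rewrite Eop /= mem_head.
- have [y [op' [H1 H2 H3]]] := IH _ _ _ _ Ht Hx Hne'.
  exists y, op'; split => //; first by rewrite inE H1 orbT.
  by move=> P /H3 /Hps.
Qed.

Lemma trace_succ D f st ps vs e x :
  trace D f st = Some (ps, vs, e) -> x \in vs -> ~~ final D x ->
  exists x' op, step D x = Some (x', op) /\ forall P, op = Some P -> P \in ps.
Proof.
elim: f st ps vs e => [|f IH] st ps vs e //=.
case: ifP => [Hf [_ <- _]|Hf]; first by rewrite inE => /eqP ->; rewrite /final Hf.
case Hs: (step D st) => [[st' op]|] //.
case Ht: (trace D f st') => [[[ps' vs'] e']|] // [<- <- _].
have Hps : forall P, P \in ps' -> P \in ocons op ps'.
  by case: op {Hs} => [?|] P //= HP; rewrite inE HP orbT.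
rewrite inE => /orP [/eqP -> |Hx] Hnf.
- exists st', op; split => //.
  by move=> P Eop; rewrite Eop /= mem_head.
- have [x' [op' [H1 H2]]] := IH _ _ _ _ Ht Hx Hnf.
  by exists x', op'; split => // P /H2 /Hps.
Qed.

Lemma step_level D st st' op : st.1.1 <= size D -> ~~ final D st ->
  step D st = Some (st', op) -> st'.1.1 <= size D.
Proof.
case: st => [[l p] dn] /=; rewrite /final /= => Hl Hf.
case: dn Hf => /= Hf.
- case: (sl D l) => [k b|k|k|k] /=; repeat case: ifP => _; move=> [<- _] /=; lia.
- case: l Hl Hf => [|l] Hl Hf //=.
  case: (sl D l) => [k b|k|k|k] /=; repeat case: ifP => _; move=> [<- _] /=; lia.
Qed.

Lemma trace_level D f st ps vs e : st.1.1 <= size D ->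
  trace D f st = Some (ps, vs, e) -> forall x, x \in vs -> x.1.1 <= size D.
Proof.
elim: f st ps vs e => [|f IH] st ps vs e //= Hst.
case: ifP => [Hf [_ <- _]|Hf]; first by move=> x; rewrite inE => /eqP ->.
case Hs: (step D st) => [[st' op]|] //.
case Ht: (trace D f st') => [[[ps' vs'] e']|] // [_ <- _] x.
rewrite inE => /orP [/eqP -> //|Hx].
apply: (IH _ _ _ _ _ Ht) => //.
by apply: (step_level Hst _ Hs); rewrite /final Hf.
Qed.

Lemma swap_k k : swap k k = k.+1. Proof. by rewrite /swap eqxx. Qed.
Lemma swap_k1 k : swap k k.+1 = k.
Proof. by rewrite /swap eqxx; case: ifP => // /eqP; lia. Qed.
Lemma swapK k p : swap k (swap k p) = p.
Proof.
rewrite /swap; case: (eqVneq p k) => [->|H1]; first by rewrite (_ : k.+1 == k = false) ?eqxx //; lia.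
case: (eqVneq p k.+1) => [->|H2]; first by rewrite eqxx.
by rewrite (negbTE H1) (negbTE H2).
Qed.

Lemma shape_slice w n D l : shape_ok w n D -> l < size D ->
  slice_ok (nth 0 (widths w D) l) (sl D l).
Proof.
elim: D w l => [|s D IH] w l //= /andP [Hs Hsh].
case: l => [|l] //= Hl. exact: IH.
Qed.

Lemma step_passage D x x' P : step D x = Some (x', Some P) ->
  exists k top, [/\ sl D P.1.1 = SVirt k, (top == k) || (top == k.+1), P.1.2 = (top == k) &
     x = (P.1.1, top, true) \/ x = (P.1.1.+1, swap k top, false)].
Proof.
case: x => [[l p] [|]] /=.
- case E: (sl D l) => [k b|k|k|k] /=; repeat case: ifP => //; try by [].
  move=> Hp [_ <-] /=. exists k, p; split => //; by left.
- case: l => [|l] //=.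
  case E: (sl D l) => [k b|k|k|k] /=; repeat case: ifP => //; try by [].
  move=> Hp [_ <-] /=. exists k, (swap k p); rewrite swapK; split => //; last by right.
  + by case/orP: Hp => /eqP ->; rewrite ?swap_k ?swap_k1 eqxx ?orbT.
  + case/orP: Hp => /eqP ->; rewrite ?swap_k ?swap_k1 ?eqxx //; apply/eqP/eqP; lia.
Qed.

Lemma step_into D y l q op k : sl D l = SVirt k -> step D y = Some ((l, q, false), op) ->
  y = (l.+1, swap k q, false) /\
  op = if (swap k q == k) || (swap k q == k.+1) then Some (l, swap k q == k.+1, false) else None.
Proof.
move=> Hsl; case: y => [[l0 p0] [|]] /=; last case: l0 => [|l0] //=.
all: case E: (sl D _) => [k0 b|k0|k0|k0] /=; repeat case: ifP => ?; try by case.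
all: try by case=> El _ _; rewrite El Hsl in E.
all: case=> El Eq Eop; subst l0 q op; rewrite Hsl in E; case: E => Ek; subst k0.
all: repeat match goal with H : context [swap ?k (swap ?k ?p)] |- _ => rewrite swapK in H end.
all: rewrite swapK; split => //; congruence.
Qed.

Lemma partner_range n D i t k' t' : partner n D i t = Some (k', t') ->
  k' < n /\ t' < size (passages n D k').
Proof.
rewrite /partner.
set s := filter _ _.
case Es: s => [|x s'] //= [Ex].
have : (k', t') \in s by rewrite Es -Ex mem_head.
rewrite mem_filter => /andP [_ /allpairsPdep [a [b [Ha Hb Eab]]]].
case: Eab => -> ->; move: Ha Hb; rewrite !mem_iota; lia.
Qed.

Lemma partner_some n D i t : vsl_diagram n D -> i < n -> t < size (passages n D i) ->
  exists k' t', partner n D i t = Some (k', t').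
Proof.
move=> /andP [/andP [Hsh Htr] Hcov] Hi Ht.
have Htri : string_trace n D i != None by move/allP: Htr; apply; rewrite mem_iota.
case Es: (string_trace n D i) Htri => [[[ps vs] e]|] // _.
set P := nth dpass (passages n D i) t.
have HP : P \in ps by rewrite /P /passages Es; apply: mem_nth; move: Ht; rewrite /passages Es.
have [x [x' [Hx Hnf Hst]]] := trace_pass Es HP.
have [k [top [Hsl Htop HP2 Hxe]]] := step_passage Hst.
have Hlev := trace_level (isT : (0, i, true).1.1 <= size D) Es Hx.
set l := P.1.1 in Hsl HP2 Hxe.
have Hl : l < size D.
  case: Hxe Hlev Hnf => -> /=; rewrite /final /=; lia.
have Hw := shape_slice Hsh Hl; rewrite Hsl /= in Hw.
set q := swap k top.
have Hq : q < width n D l.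
  by rewrite /q /width; case/orP: Htop => /eqP ->; rewrite ?swap_k ?swap_k1; lia.
have Hq2 : (q == k) || (q == k.+1).
  by rewrite /q; case/orP: Htop => /eqP ->; rewrite ?swap_k ?swap_k1 eqxx ?orbT.
move/allP: Hcov => /(_ l); rewrite mem_iota => /(_ ltac:(lia)).
move/allP => /(_ q); rewrite mem_iota => /(_ ltac:(lia)).
move/hasP => [i' Hi' Hvis].
have Htri' : string_trace n D i' != None by move/allP: Htr; apply.
case Es': (string_trace n D i') Htri' => [[[ps' vs'] e']|] // _.
rewrite /visited Es' in Hvis.
have [P' [HP' HP'1 HP'2]] : exists P', [/\ P' \in ps', P'.1.1 = l & P'.1.2 != P.1.2].
  case/orP: Hvis => Hv.
  - have Hnf' : ~~ final D (l, q, true) by rewrite /final /=; lia.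
    have [x'' [op [Hs Hop]]] := trace_succ Es' Hv Hnf'.
    + exists (l, q == k, true); split => //.
      * apply: Hop; move: Hs; rewrite /= Hsl Hq2 /=. by case=> _ <-.
      * rewrite HP2 /q /=. by case/orP: Htop => /eqP ->; rewrite ?swap_k ?swap_k1 eqxx; apply/eqP; lia.
  - have Hne : (l, q, false) != (0, i', true) by rewrite !xpair_eqE andbF.
    have [y [op [Hy Hs Hop]]] := trace_pred Es' Hv Hne.
    have [_ Eop] := step_into Hsl Hs.
    rewrite /q swapK Htop in Eop.
    exists (l, top == k.+1, false); split => //.
    * exact: Hop.
    * rewrite HP2 /=. by case/orP: Htop => /eqP ->; rewrite eqxx; apply/eqP; lia.
rewrite /partner -/P -/l.
set s := filter _ _.
have Hin : (i', index P' (passages n D i')) \in s.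
  rewrite mem_filter /= /passages Es' nth_index // HP'1 eqxx andbT.
  apply/andP; split.
  - apply/eqP => [[Ei Et]]; subst i'.
    move: Es'; rewrite Es => [[Eps _ _]]; subst ps'.
    move: HP'2; rewrite /P /passages Es -Et nth_index //. by rewrite eqxx.
  - apply/allpairsPdep; exists i', (index P' (passages n D i')); split => //.
    by rewrite mem_iota /passages Es' index_mem.
    by rewrite /passages Es'.
case: s Hin => [|[a b] s'] //= _.
by exists a, b.
Qed.
Open Scope ring_scope.

Definition NN n D k := size (passages n D k).
Definition V n D (j k t : nat) ds : dual :=
  match run n D k t ds with Some (j', w) => if j' == j then w else dzero | None => dzero end.
Definition Ssum (f : seq bool -> int) m :=
  \sum_(m' <- iota 0 m.+1) \sum_(ds <- bseqs m') f ds.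

Lemma eq_Ssum f g m : f =1 g -> Ssum f m = Ssum g m.
Proof. by move=> H; apply: eq_bigr => m' _; apply: eq_bigr => ds _. Qed.
Lemma Ssum0 m : Ssum (fun _ => 0) m = 0.
Proof. by rewrite /Ssum big1 // => m' _; rewrite big1. Qed.
Lemma SsumD f g m : Ssum (fun ds => f ds + g ds) m = Ssum f m + Ssum g m.
Proof. by rewrite /Ssum -big_split; apply: eq_bigr => m' _; rewrite big_split. Qed.
Lemma SsumM a f m : Ssum (fun ds => a * f ds) m = a * Ssum f m.
Proof. by rewrite /Ssum mulr_sumr; apply: eq_bigr => m' _; rewrite mulr_sumr. Qed.

Lemma iotaS_map a b : iota a.+1 b = map S (iota a b).
Proof. by elim: b a => [|b IH] a //=; rewrite IH. Qed.

Lemma Ssum_S f m : Ssum f m.+1 =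
  f [::] + Ssum (fun ds => f (true :: ds)) m + Ssum (fun ds => f (false :: ds)) m.
Proof.
rewrite /Ssum.
have -> : iota 0 m.+2 = 0 :: map S (iota 0 m.+1) by rewrite /= iotaS_map.
rewrite big_cons big_map /= big_seq1 -addrA -big_split /=; congr (_ + _).
apply: eq_bigr => m' _.
by rewrite cats0 big_cat !big_map.
Qed.

Lemma dmul0 a : dmul a dzero = dzero.
Proof. by rewrite /dmul /= !mulr0 addr0. Qed.

Lemma V_nil n D j k t : V n D j k t [::] =
  if (t == NN n D k) && (endpos n D k == j) then done_ else dzero.
Proof. by rewrite /V /NN /=; case: (t == _) => //=; case: (_ == j). Qed.

Lemma V_cons n D j k t d ds : V n D j k t (d :: ds) =
  if (t < NN n D k)%N then
    (if d then match partner n D k t with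
               | Some (k', t') => dmul (jump_w (upper_left n D k t)) (V n D j k' t'.+1 ds)
               | None => dzero end
     else dmul (cont_w (upper_left n D k t)) (V n D j k t.+1 ds))
  else dzero.
Proof.
rewrite /V /NN /=; case: ifP => // _; case: d.
- case: (partner n D k t) => [[k' t']|] //.
  by case: (run n D k' t'.+1 ds) => [[j' w]|]; [case: ifP => _ //|]; rewrite dmul0.
- by case: (run n D k t.+1 ds) => [[j' w]|]; [case: ifP => _ //|]; rewrite dmul0.
Qed.

Definition S1 n D j k t m := Ssum (fun ds => (V n D j k t ds).1) m.
Definition S2 n D j k t m := Ssum (fun ds => (V n D j k t ds).2) m.

Lemma S1_S n D j k t m : S1 n D j k t m.+1 =
  (if (t == NN n D k) && (endpos n D k == j) then 1 else 0)
  + (if (t < NN n D k)%N then S1 n D j k t.+1 m else 0).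
Proof.
rewrite /S1 Ssum_S V_nil.
rewrite (@eq_Ssum _ (fun _ => 0)); last first.
  move=> ds; rewrite V_cons; case: ifP => // _.
  by case: partner => [[k' t']|] //=; case: upper_left; rewrite mul0r.
rewrite Ssum0 addr0.
have -> : (if (t == NN n D k) && (endpos n D k == j) then done_ else dzero).1 =
   (if (t == NN n D k) && (endpos n D k == j) then 1 else 0) by case: ifP.
congr (_ + _).
case: ifP => Ht.
- by apply: eq_Ssum => ds; rewrite V_cons Ht /=; case: upper_left; rewrite mul1r.
- by rewrite -(Ssum0 m); apply: eq_Ssum => ds; rewrite V_cons Ht.
Qed.

Lemma S2_S n D j k t m : S2 n D j k t m.+1 =
  if (t < NN n D k)%N then
    (match partner n D k t with
     | Some (k', t') => (jump_w (upper_left n D k t)).2 * S1 n D j k' t'.+1 m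
     | None => 0 end)
    + S2 n D j k t.+1 m + (cont_w (upper_left n D k t)).2 * S1 n D j k t.+1 m
  else 0.
Proof.
rewrite /S2 Ssum_S V_nil.
have -> : (if (t == NN n D k) && (endpos n D k == j) then done_ else dzero).2 = 0
  by case: ifP.
rewrite add0r.
case: ifP => Ht; last first.
  by rewrite -(Ssum0 m) -SsumD; apply: eq_Ssum => ds; rewrite !V_cons Ht addr0.
rewrite -addrA; congr (_ + _).
- case Ep: (partner n D k t) => [[k' t']|].
  + rewrite /S1 -SsumM; apply: eq_Ssum => ds; rewrite V_cons Ht Ep /=.
    by case: upper_left => /=; rewrite mul0r add0r.
  + by rewrite -(Ssum0 m); apply: eq_Ssum => ds; rewrite V_cons Ht Ep.
- rewrite /S1 -SsumM -SsumD; apply: eq_Ssum => ds; rewrite V_cons Ht /=.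
  by case: upper_left => /=; rewrite mul1r.
Qed.

Lemma S1_val n D j k : forall m t, (t <= NN n D k)%N -> (NN n D k - t <= m)%N ->
  S1 n D j k t m = if endpos n D k == j then 1 else 0.
Proof.
elim=> [|m IH] t Ht Hm.
- have Et : t = NN n D k by lia.
  rewrite /S1 /Ssum /= big_cons big_nil addr0 big_cons big_nil addr0 V_nil Et eqxx /=.
  by case: ifP.
- rewrite S1_S; case: (ltnP t (NN n D k)) => Htn.
  + rewrite (_ : t == NN n D k = false); last by apply/negbTE; rewrite neq_ltn Htn.
    by rewrite add0r IH //; lia.
  + have Et : t = NN n D k by lia.
    by rewrite Et eqxx /= addr0.
Qed.

Definition g n D (j i u : nat) : int :=
  match partner n D i u with
  | Some (k', t') => (jump_w (upper_left n D i u)).2 * (if endpos n D k' == j then 1 else 0)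
  | None => 0 end
  + (cont_w (upper_left n D i u)).2 * (if endpos n D i == j then 1 else 0).

Lemma S2_val n D j i C : (NN n D i <= C)%N ->
  (forall u k' t', partner n D i u = Some (k', t') ->
     (t' < NN n D k')%N /\ (NN n D k' + NN n D i <= C)%N) ->
  forall m t, (m + t = C)%N -> (t <= NN n D i)%N ->
  S2 n D j i t m = \sum_(t <= u < NN n D i) g n D j i u.
Proof.
move=> HC Hp; elim=> [|m IH] t Hmt Ht.
- have Et : t = NN n D i by lia.
  rewrite /S2 /Ssum /= big_cons big_nil addr0 big_cons big_nil addr0 V_nil.
  by rewrite big_geq ?Et //; case: ifP.
- rewrite S2_S; case: (ltnP t (NN n D i)) => Htn; last first.
    by rewrite big_geq.
  rewrite big_ltn // (IH t.+1) //; last by lia.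
  rewrite (S1_val _ _ (m := m) (t := t.+1)); try lia.
  rewrite /g; case Ep: (partner n D i t) => [[k' t']|].
  + have [H1 H2] := Hp _ _ _ Ep.
    rewrite (S1_val _ _ (m := m) (t := t'.+1)); try lia.
    by rewrite addrAC.
  + by rewrite addrAC.
Qed.

Close Scope ring_scope.
Import Order.TTheory.

Lemma foldr2 (L : seq dual) : (foldr dadd dzero L).2 = (\sum_(x <- L) x.2)%R.
Proof. by elim: L => [|x L IH]; rewrite ?big_nil ?big_cons //= IH. Qed.

Lemma bb_S2 n D i j : (bb_entry n D i j).2 = S2 n D j i 0 (path_bound n D).
Proof. by rewrite /bb_entry foldr2 big_allpairs_dep. Qed.

Definition crossp n D (i u : nat) : bool :=
  match partner n D i u with Some (k', _) => k' != i | None => false end.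

Lemma g_bound n D j i u : vsl_diagram n D -> i < n -> u < NN n D i ->
  (`|g n D j i u| <= (crossp n D i u : nat)%:R)%R.
Proof.
move=> Hv Hi Hu.
have [k' [t' Ep]] := partner_some Hv Hi Hu.
rewrite /g /crossp Ep.
case: (eqVneq k' i) => [->|Hne] /=.
- by case: upper_left; case: (endpos n D i == j).
- by case: upper_left; case: (endpos n D k' == j); case: (endpos n D i == j).
Qed.

Lemma sum_bound (s : seq nat) (p : pred nat) (f : nat -> int) :
  (forall u, u \in s -> `|f u| <= (p u : nat)%:R)%R ->
  (`|\sum_(u <- s) f u| <= (count p s)%:R)%R.
Proof.
elim: s => [|a s IH] H; first by rewrite big_nil.
rewrite big_cons /= natrD.
apply: (le_trans (ler_normD _ _)); apply: lerD.
- by apply: H; rewrite mem_head.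
- by apply: IH => u Hu; apply: H; rewrite inE Hu orbT.
Qed.

Lemma le_sumn (x : nat) s : x \in s -> x <= sumn s.
Proof. by elim: s => [|y s IH] //=; rewrite inE => /orP [/eqP ->|/IH]; lia. Qed.

Lemma NN_le n D k : k < n -> NN n D k <= sumn [seq size (passages n D k) | k <- iota 0 n].
Proof. by move=> Hk; apply: le_sumn; apply: map_f; rewrite mem_iota. Qed.

Theorem proposition3p1 (n : nat) (D : diagram) (i : 'I_n) :
  vsl_diagram n D -> a_row D i <= vcross_other n D i.
Proof.
move=> Hv; apply/bigmax_leqP => j _; rewrite mxE bb_S2.
have Hi := ltn_ord i.
have HNi := NN_le D Hi.
rewrite (@S2_val n D j i (path_bound n D) _ _ (path_bound n D) 0) //; first last.
- rewrite /path_bound; lia.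
- move=> u k' t' Ep; have [H1 H2] := partner_range Ep.
  move: HNi; have := NN_le D H1; rewrite /path_bound /NN; lia.
- rewrite /path_bound /NN in HNi *; lia.
rewrite /index_iota ?subn0 -lez_nat abszE -natz.
apply: sum_bound => u; rewrite mem_iota => /andP [_ Hu].
exact: g_bound.
Qed.
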